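(* Let $(\mu,u)$ be a classical structure on $A$ with spiders $\Xi_n^m$, classical channel $C_\Xi$, complementary endomorphism $H$, and let $\mathrm{CNOT}:=(\Xi_2^1\otimes H)\circ(1_A\otimes H\otimes 1_A)\circ(1_A\otimes\Xi_1^2)\circ(1_A\otimes H)$. Then the morphism $$\mathrm{Bell\text{-}Meas}:=\big((C_\Xi\circ H)\otimes C_\Xi\big)\circ\mathrm{CNOT}:A\otimes A\to A\otimes A$$ is a non-degenerate destructive measurement on two systems of type $A$, i.e. it equals $(C_\Xi\otimes C_\Xi)\circ U$ for some unitary $U:A\otimes A\to A\otimes A$ in $\mathbf C^{pure}$.
   Context: Setting. $\mathbf C$ is a strict symmetric monoidal category with monoidal unit $\mathrm I$, symmetry $\sigma$, and a dagger functor $(-)^\dagger$ (identity on objects, contravariant, involutive, strict monoidal). $\mathbf C^{pure}$ is a subcategory of $\mathbf C$ with the same objects, closed under $\otimes$ and $\dagger$, containing identities, symmetries and the maps $\eta_A$ below. Every object $A$ is self-dual: there is $\eta_A:\mathrm I\to A\otimes A$ in $\mathbf C^{pure}$ with $\epsilon_A:=\eta_A^\dagger$, $(\epsilon_A\otimes 1_A)\circ(1_A\otimes\eta_A)=1_A$ and $\sigma_{A,A}\circ\eta_A=\eta_A$. A morphism $U$ is unitary if $U^\dagger\circ U=1$ and $U\circ U^\dagger=1$. Environment structure: a family of morphisms $\top_A:A\to\mathrm I$ in $\mathbf C$ such that (E1) for all objects $A,B$ and all $f,g\in\mathbf C^{pure}(A,B)$: $f^\dagger\circ f=g^\dagger\circ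 g$ if and only if $\top_B\circ f=\top_B\circ g$; (E2) $\top_{A\otimes B}=\top_A\otimes\top_B$; (E3) $(1_A\otimes\top_A)\circ\eta_A=\bot_A$, where $\bot_A:=\top_A^\dagger$. Classical structure on $A$: morphisms $\mu:A\otimes A\to A$ and $u:\mathrm I\to A$ in $\mathbf C^{pure}$, with $\delta:=\mu^\dagger$, such that $\mu$ is associative with unit $u$, $\mu\circ\sigma_{A,A}=\mu$, $(1_A\otimes\mu)\circ(\delta\otimes 1_A)=\delta\circ\mu$, $\mu\circ\delta=1_A$, and $\eta_A=\delta\circ u$. Spiders: $\mu_0:=u$, $\mu_1:=1_A$, $\mu_{k+1}:=\mu\circ(\mu_k\otimes 1_A)$, and $\Xi_n^m:=\mu_m^\dagger\circ\mu_n:A^{\otimes n}\to A^{\otimes m}$. The classical channel is $C_\Xi:=(1_A\otimes\top_A)\circ\Xi_1^2$. Complementary endomorphism: $H:A\to A$ in $\mathbf C^{pure}$ with $(H\otimes 1_A)\circ\eta_A=(1_A\otimes H)\circ\eta_A$, $H^\dagger=H$, $H$ unitary, and $\Xi_2^1\circ(H\otimes H)\circ\Xi_1^2=\Xi_0^1\circ\Xi_1^0$. A non-degenerate destructive measurement on $n$ systems of type $A$ is a morphism $(C_\Xi\otimes\cdots\otimes C_\Xi)\circ U$ with $U:A^{\otimes n}\to A^{\otimes n}$ unitary. *)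

(* Defs.v *)
Set Implicit Arguments.
Unset Strict Implicit.

(* transport of a morphism along equalities of objects (needed because
   strictness of the monoidal structure is an equality of objects) *)
Definition castH {Ob : Type} {Hom : Ob -> Ob -> Type} {A B A' B' : Ob}
  (e1 : A = A') (e2 : B = B') (f : Hom A B) : Hom A' B' :=
  match e1 in _ = X, e2 in _ = Y return Hom X Y with
  | eq_refl, eq_refl => f end.

Record SMDC := {
  Ob : Type;
  Hom : Ob -> Ob -> Type;
  idm : forall A, Hom A A;
  comp : forall A B C, Hom B C -> Hom A B -> Hom A C;
  comp_idl : forall A B (f : Hom A B), comp (idm B) f = f;
  comp_idr : forall A B (f : Hom A B), comp f (idm A) = f;
  comp_assoc : forall A B C D (f : Hom A B) (g : Hom B C) (h : Hom C D),
      comp h (comp g f) = comp (comp h g) f;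
  unitO : Ob;
  tens : Ob -> Ob -> Ob;
  tensH : forall A B C D, Hom A B -> Hom C D -> Hom (tens A C) (tens B D);
  tens_assoc : forall A B C, tens (tens A B) C = tens A (tens B C);
  tens_unitl : forall A, tens unitO A = A;
  tens_unitr : forall A, tens A unitO = A;
  tensH_id : forall A B, tensH (idm A) (idm B) = idm (tens A B);
  tensH_comp : forall A B C A' B' C' (f : Hom A B) (g : Hom B C)
      (f' : Hom A' B') (g' : Hom B' C'),
      tensH (comp g f) (comp g' f') = comp (tensH g g') (tensH f f');
  tensH_assoc : forall A B C D E F (f : Hom A B) (g : Hom C D) (h : Hom E F),
      castH (Hom := Hom) (tens_assoc A C E) (tens_assoc B D F)
        (tensH (tensH f g) h) = tensH f (tensH g h);
  tensH_unitl : forall A B (f : Hom A B),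
      castH (Hom := Hom) (tens_unitl A) (tens_unitl B) (tensH (idm unitO) f) = f;
  tensH_unitr : forall A B (f : Hom A B),
      castH (Hom := Hom) (tens_unitr A) (tens_unitr B) (tensH f (idm unitO)) = f;
  sym : forall A B, Hom (tens A B) (tens B A);
  sym_nat : forall A B C D (f : Hom A B) (g : Hom C D),
      comp (sym B D) (tensH f g) = comp (tensH g f) (sym A C);
  sym_inv : forall A B, comp (sym B A) (sym A B) = idm (tens A B);
  sym_hex : forall A B C,
      sym A (tens B C) =
      castH (Hom := Hom) (tens_assoc A B C) (eq_sym (tens_assoc B C A))
        (comp (tensH (idm B) (sym A C))
              (castH (Hom := Hom) eq_refl (tens_assoc B A C)
                 (tensH (sym A B) (idm C))));
  dag : forall A B, Hom A B -> Hom B A;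
  dag_id : forall A, dag (idm A) = idm A;
  dag_comp : forall A B C (f : Hom A B) (g : Hom B C),
      dag (comp g f) = comp (dag f) (dag g);
  dag_invol : forall A B (f : Hom A B), dag (dag f) = f;
  dag_tens : forall A B C D (f : Hom A B) (g : Hom C D),
      dag (tensH f g) = tensH (dag f) (dag g);
  dag_sym : forall A B, dag (sym A B) = sym B A
}.

Arguments Hom : clear implicits.
Arguments idm {s} A.
Arguments comp {s A B C} _ _.
Arguments tensH {s A B C D} _ _.
Arguments sym {s} A B.
Arguments dag {s A B} _.
Arguments unitO {s}.
Arguments tens {s} _ _.
Arguments tens_assoc {s} A B C.
Arguments tens_unitl {s} A.
Arguments tens_unitr {s} A.

Section Defs.
Variable C : SMDC.
Local Notation Hom := (Hom C).
Local Notation I := (@unitO C).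
Local Notation "f \o g" := (comp f g) (at level 40, left associativity).
Local Notation "f (x) g" := (tensH f g) (at level 35).


Definition unitary {A B : Ob C} (U : Hom A B) : Prop :=
  dag U \o U = idm A /\ U \o dag U = idm B.

Definition pure_subcategory (pure : forall A B : Ob C, Hom A B -> Prop)
    (eta : forall A, Hom I (tens A A)) : Prop :=
  (forall A, pure A A (idm A)) /\
  (forall A B D (f : Hom A B) (g : Hom B D),
      pure _ _ f -> pure _ _ g -> pure _ _ (g \o f)) /\
  (forall A B A' B' (f : Hom A B) (g : Hom A' B'),
      pure _ _ f -> pure _ _ g -> pure _ _ (f (x) g)) /\
  (forall A B (f : Hom A B), pure _ _ f -> pure _ _ (dag f)) /\
  (forall A B, pure _ _ (sym A B)) /\
  (forall A, pure _ _ (eta A)).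

Definition self_dual (eta : forall A, Hom I (tens A A)) : Prop :=
  forall A,
    castH (Hom := Hom) (tens_unitr A) (tens_unitl A)
      ((dag (eta A) (x) idm A) \o
       castH (Hom := Hom) eq_refl (eq_sym (tens_assoc A A A)) (idm A (x) eta A))
      = idm A /\
    sym A A \o eta A = eta A.

Definition environment (pure : forall A B : Ob C, Hom A B -> Prop)
    (eta : forall A, Hom I (tens A A)) (top : forall A, Hom A I) : Prop :=
  (forall A B (f g : Hom A B), pure _ _ f -> pure _ _ g ->
      (dag f \o f = dag g \o g <-> top B \o f = top B \o g)) /\
  (forall A B, top (tens A B) =
      castH (Hom := Hom) eq_refl (tens_unitl I) (top A (x) top B)) /\
  (forall A, castH (Hom := Hom) eq_refl (tens_unitr A)
      ((idm A (x) top A) \o eta A) = dag (top A)).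

(* A^{(x) n}, with A^{(x)0} = I, A^{(x)1} = A, A^{(x)(n+1)} = A^{(x)n} (x) A *)
Fixpoint tpowS (A : Ob C) (n : nat) : Ob C :=
  match n with O => A | S k => tens (tpowS A k) A end.
Definition tpow (A : Ob C) (n : nat) : Ob C :=
  match n with O => I | S k => tpowS A k end.

Fixpoint mu_S (A : Ob C) (mu : Hom (tens A A) A) (n : nat) : Hom (tpowS A n) A :=
  match n return Hom (tpowS A n) A with
  | O => idm A
  | S k => mu \o (mu_S mu k (x) idm A)
  end.
Definition mu_n (A : Ob C) (mu : Hom (tens A A) A) (u : Hom I A) (n : nat)
  : Hom (tpow A n) A :=
  match n return Hom (tpow A n) A with O => u | S k => mu_S mu k end.

Definition Xi (A : Ob C) (mu : Hom (tens A A) A) (u : Hom I A) (n m : nat)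
  : Hom (tpow A n) (tpow A m) := dag (mu_n mu u m) \o mu_n mu u n.

Definition classical_structure (pure : forall A B : Ob C, Hom A B -> Prop)
    (eta : forall A, Hom I (tens A A))
    (A : Ob C) (mu : Hom (tens A A) A) (u : Hom I A) : Prop :=
  pure _ _ mu /\ pure _ _ u /\
  mu \o (mu (x) idm A) =
    castH (Hom := Hom) (eq_sym (tens_assoc A A A)) eq_refl (mu \o (idm A (x) mu)) /\
  castH (Hom := Hom) (tens_unitl A) eq_refl (mu \o (u (x) idm A)) = idm A /\
  castH (Hom := Hom) (tens_unitr A) eq_refl (mu \o (idm A (x) u)) = idm A /\
  mu \o sym A A = mu /\
  (idm A (x) mu) \o castH (Hom := Hom) eq_refl (tens_assoc A A A) (dag mu (x) idm A)
    = dag mu \o mu /\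
  mu \o dag mu = idm A /\
  eta A = dag mu \o u.

Definition C_Xi (top : forall A, Hom A I)
    (A : Ob C) (mu : Hom (tens A A) A) (u : Hom I A) : Hom A A :=
  castH (Hom := Hom) eq_refl (tens_unitr A) ((idm A (x) top A) \o Xi mu u 1 2).

Definition complementary (pure : forall A B : Ob C, Hom A B -> Prop)
    (eta : forall A, Hom I (tens A A))
    (A : Ob C) (mu : Hom (tens A A) A) (u : Hom I A) (H : Hom A A) : Prop :=
  pure _ _ H /\
  (H (x) idm A) \o eta A = (idm A (x) H) \o eta A /\
  dag H = H /\
  unitary H /\
  Xi mu u 2 1 \o (H (x) H) \o Xi mu u 1 2 = Xi mu u 0 1 \o Xi mu u 1 0.

Definition CNOT (A : Ob C) (mu : Hom (tens A A) A) (u : Hom I A) (H : Hom A A)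
  : Hom (tens A A) (tens A A) :=
  (Xi mu u 2 1 (x) H) \o ((idm A (x) H) (x) idm A)
  \o castH (Hom := Hom) eq_refl (eq_sym (tens_assoc A A A)) (idm A (x) Xi mu u 1 2)
  \o (idm A (x) H).

Definition BellMeas (top : forall A, Hom A I)
    (A : Ob C) (mu : Hom (tens A A) A) (u : Hom I A) (H : Hom A A)
  : Hom (tens A A) (tens A A) :=
  ((C_Xi top mu u \o H) (x) C_Xi top mu u) \o CNOT mu u H.

Fixpoint CXi_S (top : forall A, Hom A I)
    (A : Ob C) (mu : Hom (tens A A) A) (u : Hom I A) (n : nat)
  : Hom (tpowS A n) (tpowS A n) :=
  match n return Hom (tpowS A n) (tpowS A n) with
  | O => C_Xi top mu u
  | S k => CXi_S top mu u k (x) C_Xi top mu u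
  end.
Definition CXi_n (top : forall A, Hom A I)
    (A : Ob C) (mu : Hom (tens A A) A) (u : Hom I A) (n : nat)
  : Hom (tpow A n) (tpow A n) :=
  match n return Hom (tpow A n) (tpow A n) with
  | O => idm I | S k => CXi_S top mu u k end.

Definition nondeg_destructive_measurement
    (pure : forall A B : Ob C, Hom A B -> Prop) (top : forall A, Hom A I)
    (A : Ob C) (mu : Hom (tens A A) A) (u : Hom I A) (n : nat)
    (M : Hom (tpow A n) (tpow A n)) : Prop :=
  exists U : Hom (tpow A n) (tpow A n),
    pure _ _ U /\ unitary U /\ M = CXi_n top mu u n \o U.

End Defs.

(* Main.v *)
Require Import Defs.
From Stdlib Require Import Eqdep Setoid.

Definition heq {C : SMDC} {X Y X' Y' : Ob C} (f : Hom C X Y) (g : Hom C X' Y') : Prop :=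
  exists (e1 : X = X') (e2 : Y = Y'), castH (Hom := Hom C) e1 e2 f = g.
Infix "≈" := heq (at level 70).

Lemma hrefl {C : SMDC} {X Y : Ob C} (f : Hom C X Y) : f ≈ f.
Proof. exists eq_refl, eq_refl. reflexivity. Qed.

Lemma eq_heq {C : SMDC} {X Y : Ob C} (f g : Hom C X Y) : f = g -> f ≈ g.
Proof. intros ->. apply hrefl. Qed.

Lemma heq_eq {C : SMDC} {X Y : Ob C} (f g : Hom C X Y) : f ≈ g -> f = g.
Proof.
  intros [e1 [e2 E]]. rewrite (UIP_refl _ _ e1), (UIP_refl _ _ e2) in E. exact E.
Qed.

Lemma hsym {C : SMDC} {X Y X' Y' : Ob C} (f : Hom C X Y) (g : Hom C X' Y') : f ≈ g -> g ≈ f.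
Proof.
  intros [e1 [e2 E]]. destruct e1, e2. simpl in E. subst. apply hrefl.
Qed.

Lemma htrans {C : SMDC} {X Y X' Y' X'' Y'' : Ob C} (f : Hom C X Y) (g : Hom C X' Y')
  (h : Hom C X'' Y'') : f ≈ g -> g ≈ h -> f ≈ h.
Proof.
  intros [e1 [e2 E]] [e1' [e2' E']]. destruct e1, e2, e1', e2'. simpl in *. subst. apply hrefl.
Qed.

Lemma hcomp {C : SMDC} {X Y Z X' Y' Z' : Ob C} (f : Hom C X Y) (g : Hom C Y Z)
  (f' : Hom C X' Y') (g' : Hom C Y' Z') : f ≈ f' -> g ≈ g' -> comp g f ≈ comp g' f'.
Proof.
  intros [e1 [e2 E]] [e1' [e2' E']]. destruct e1, e2.
  rewrite (UIP_refl _ _ e1') in E'. destruct e2'. simpl in *. subst. apply hrefl.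
Qed.

Lemma htens {C : SMDC} {X Y Z W X' Y' Z' W' : Ob C} (f : Hom C X Y) (g : Hom C Z W)
  (f' : Hom C X' Y') (g' : Hom C Z' W') : f ≈ f' -> g ≈ g' -> tensH f g ≈ tensH f' g'.
Proof.
  intros [e1 [e2 E]] [e1' [e2' E']]. destruct e1, e2, e1', e2'. simpl in *. subst. apply hrefl.
Qed.

Lemma hdag {C : SMDC} {X Y X' Y' : Ob C} (f : Hom C X Y) (f' : Hom C X' Y') :
  f ≈ f' -> dag f ≈ dag f'.
Proof. intros [e1 [e2 E]]. destruct e1, e2. simpl in E. subst. apply hrefl. Qed.

Lemma hcast {C : SMDC} {X Y X' Y' : Ob C} (e1 : X = X') (e2 : Y = Y') (f : Hom C X Y) :
  castH (Hom := Hom C) e1 e2 f ≈ f.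
Proof. apply hsym. exists e1, e2. reflexivity. Qed.

Lemma hid {C : SMDC} {X X' : Ob C} (e : X = X') : idm X ≈ idm X'.
Proof. destruct e. apply hrefl. Qed.

Lemma hassoc {C : SMDC} {A B C' D E F : Ob C} (f : Hom C A B) (g : Hom C C' D) (h : Hom C E F) :
  tensH (tensH f g) h ≈ tensH f (tensH g h).
Proof. eapply htrans. 2: apply eq_heq, tensH_assoc. apply hsym, hcast. Qed.

Lemma hunitl {C : SMDC} {A B : Ob C} (f : Hom C A B) : tensH (idm unitO) f ≈ f.
Proof. eapply htrans. 2: apply eq_heq, tensH_unitl. apply hsym, hcast. Qed.

Lemma hunitr {C : SMDC} {A B : Ob C} (f : Hom C A B) : tensH f (idm unitO) ≈ f.
Proof. eapply htrans. 2: apply eq_heq, tensH_unitr. apply hsym, hcast. Qed.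

Lemma hi_cast {C : SMDC} {X Y X' Y' Z : Ob C} (e1 : X = X') (e2 : Y = Y') (f : Hom C X Y) :
  f ≈ idm Z -> castH (Hom := Hom C) e1 e2 f ≈ idm Z.
Proof. intro h. eapply htrans. apply hcast. exact h. Qed.

Ltac desteq := repeat match goal with
  | e : @eq (Ob _) ?a ?a |- _ => rewrite (UIP_refl _ _ e) in *; clear e
  | e : @eq (Ob _) _ _ |- _ => destruct e
  end; simpl in *; subst.
Ltac hfin := rewrite ?comp_idl, ?comp_idr, ?tensH_id, ?dag_id; try apply hrefl.

Lemma hi_comp {C : SMDC} {X Y W Z Z' : Ob C} (f : Hom C X Y) (g : Hom C Y W) :
  f ≈ idm Z -> g ≈ idm Z' -> comp g f ≈ idm Z.
Proof. intros [e1 [e2 E]] [e1' [e2' E']]. desteq. hfin. Qed.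

Lemma hi_tens {C : SMDC} {X Y X' Y' Z Z' : Ob C} (f : Hom C X Y) (g : Hom C X' Y') :
  f ≈ idm Z -> g ≈ idm Z' -> tensH f g ≈ idm (tens Z Z').
Proof. intros [e1 [e2 E]] [e1' [e2' E']]. desteq. hfin. Qed.

Lemma hi_dag {C : SMDC} {X Y Z : Ob C} (f : Hom C X Y) : f ≈ idm Z -> dag f ≈ idm Z.
Proof. intros [e1 [e2 E]]. desteq. hfin. Qed.

Ltac hid_solve := repeat first [ eapply hi_comp | eapply hi_tens | eapply hi_dag | eapply hi_cast | apply hrefl ].

Lemma coh {C : SMDC} {X Y Z Z' : Ob C} (f g : Hom C X Y) : f ≈ idm Z -> g ≈ idm Z' -> f = g.
Proof.
  intros h1 h2. apply heq_eq. eapply htrans. exact h1. eapply htrans. 2: apply hsym; exact h2.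
  destruct h1 as [e1 [e2 _]]. destruct h2 as [e1' [e2' _]]. apply hid. congruence.
Qed.

Lemma hstrip_l {C : SMDC} {X Y W Z X' Y' : Ob C} (f : Hom C X Y) (g : Hom C Y W) (k : Hom C X' Y') :
  g ≈ idm Z -> f ≈ k -> comp g f ≈ k.
Proof.
  intros [e1 [e2 E]] h. desteq. rewrite comp_idl. exact h.
Qed.

Lemma hstrip_r {C : SMDC} {X Y W Z X' Y' : Ob C} (f : Hom C X Y) (g : Hom C Y W) (k : Hom C X' Y') :
  f ≈ idm Z -> g ≈ k -> comp g f ≈ k.
Proof.
  intros [e1 [e2 E]] h. desteq. rewrite comp_idr. exact h.
Qed.

Definition al {C : SMDC} (X Y Z : Ob C) : Hom C (tens (tens X Y) Z) (tens X (tens Y Z)) :=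
  castH (Hom := Hom C) eq_refl (tens_assoc X Y Z) (idm _).
Definition ar {C : SMDC} (X Y Z : Ob C) : Hom C (tens X (tens Y Z)) (tens (tens X Y) Z) :=
  castH (Hom := Hom C) (tens_assoc X Y Z) eq_refl (idm _).
Definition lu {C : SMDC} (X : Ob C) : Hom C (tens unitO X) X :=
  castH (Hom := Hom C) eq_refl (tens_unitl X) (idm _).
Definition lui {C : SMDC} (X : Ob C) : Hom C X (tens unitO X) :=
  castH (Hom := Hom C) (tens_unitl X) eq_refl (idm _).
Definition ru {C : SMDC} (X : Ob C) : Hom C (tens X unitO) X :=
  castH (Hom := Hom C) eq_refl (tens_unitr X) (idm _).
Definition rui {C : SMDC} (X : Ob C) : Hom C X (tens X unitO) :=
  castH (Hom := Hom C) (tens_unitr X) eq_refl (idm _).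

Ltac hid := unfold al, ar, lu, lui, ru, rui; hid_solve.

Ltac natsolve := apply heq_eq; eapply htrans; [ | apply hsym ];
  [ repeat first [ apply hstrip_l; [hid|] | apply hstrip_r; [hid|] ]
  | repeat first [ apply hstrip_l; [hid|] | apply hstrip_r; [hid|] ] ].

Lemma al_nat {C : SMDC} {A B C' D E F : Ob C} (f : Hom C A B) (g : Hom C C' D) (h : Hom C E F) :
  comp (al B D F) (tensH (tensH f g) h) = comp (tensH f (tensH g h)) (al A C' E).
Proof.
  apply heq_eq. eapply htrans. eapply hstrip_l; [hid|]. apply hassoc.
  apply hsym. eapply hstrip_r; [hid|]. apply hrefl.
Qed.

Lemma ar_nat {C : SMDC} {A B C' D E F : Ob C} (f : Hom C A B) (g : Hom C C' D) (h : Hom C E F) :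
  comp (ar B D F) (tensH f (tensH g h)) = comp (tensH (tensH f g) h) (ar A C' E).
Proof.
  apply heq_eq. eapply htrans. eapply hstrip_l; [hid|]. apply hsym, hassoc.
  apply hsym. eapply hstrip_r; [hid|]. apply hrefl.
Qed.

Lemma lu_nat {C : SMDC} {A B : Ob C} (f : Hom C A B) :
  comp (lu B) (tensH (idm unitO) f) = comp f (lu A).
Proof.
  apply heq_eq. eapply htrans. eapply hstrip_l; [hid|]. apply hunitl.
  apply hsym. eapply hstrip_r; [hid|]. apply hrefl.
Qed.

Lemma lui_nat {C : SMDC} {A B : Ob C} (f : Hom C A B) :
  comp (lui B) f = comp (tensH (idm unitO) f) (lui A).
Proof.
  apply heq_eq. eapply htrans. eapply hstrip_l; [hid|]. apply hrefl.
  apply hsym. eapply hstrip_r; [hid|]. apply hunitl.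
Qed.

Lemma rui_nat {C : SMDC} {A B : Ob C} (f : Hom C A B) :
  comp (rui B) f = comp (tensH f (idm unitO)) (rui A).
Proof.
  apply heq_eq. eapply htrans. eapply hstrip_l; [hid|]. apply hrefl.
  apply hsym. eapply hstrip_r; [hid|]. apply hunitr.
Qed.

Notation "g ∘ f" := (comp g f) (at level 40, left associativity).
Notation "f ⊗ g" := (tensH f g) (at level 35).

Lemma castL {C : SMDC} {X Y Y' : Ob C} (e : Y = Y') (f : Hom C X Y) :
  castH (Hom := Hom C) eq_refl e f = castH (Hom := Hom C) eq_refl e (idm Y) ∘ f.
Proof. destruct e. simpl. rewrite comp_idl. reflexivity. Qed.

Lemma castR {C : SMDC} {X X' Y : Ob C} (e : X = X') (f : Hom C X Y) :
  castH (Hom := Hom C) e eq_refl f = f ∘ castH (Hom := Hom C) e eq_refl (idm X).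
Proof. destruct e. simpl. rewrite comp_idr. reflexivity. Qed.

Lemma cong2 {C : SMDC} {X Y Z W : Ob C} (a : Hom C X Y) (b : Hom C Y Z) (c : Hom C X Z) :
  b ∘ a = c -> forall h : Hom C Z W, h ∘ b ∘ a = h ∘ c.
Proof. intros E h. rewrite <- comp_assoc, E. reflexivity. Qed.

Lemma cong3 {C : SMDC} {X Y Z V W : Ob C} (a : Hom C X Y) (b : Hom C Y Z) (b' : Hom C Z V) (c : Hom C X V) :
  b' ∘ b ∘ a = c -> forall h : Hom C V W, h ∘ b' ∘ b ∘ a = h ∘ c.
Proof. intros E h. rewrite <- !comp_assoc, <- E, !comp_assoc. reflexivity. Qed.

Ltac la := repeat rewrite comp_assoc.
Lemma cong4 {C : SMDC} {X Y Z V U W : Ob C} (a : Hom C X Y) (b : Hom C Y Z) (b' : Hom C Z V) (b'' : Hom C V U) (c : Hom C X U) :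
  b'' ∘ b' ∘ b ∘ a = c -> forall h : Hom C U W, h ∘ b'' ∘ b' ∘ b ∘ a = h ∘ c.
Proof. intros E h. rewrite <- !comp_assoc, <- E, !comp_assoc. reflexivity. Qed.

Ltac rw L := first [ rewrite (cong4 _ _ _ _ _ L) | rewrite (cong3 _ _ _ _ L) | rewrite (cong2 _ _ _ L) | rewrite L ]; la.
Ltac rwb L := first [ rewrite <- (cong3 _ _ _ _ L) | rewrite <- (cong2 _ _ _ L) | rewrite <- L ].

Lemma al_ar {C : SMDC} (X Y Z : Ob C) : al X Y Z ∘ ar X Y Z = idm _.
Proof. eapply coh; hid. Qed.
Lemma ar_al {C : SMDC} (X Y Z : Ob C) : ar X Y Z ∘ al X Y Z = idm _.
Proof. eapply coh; hid. Qed.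
Lemma dag_al {C : SMDC} (X Y Z : Ob C) : dag (al X Y Z) = ar X Y Z.
Proof. eapply coh; hid. Qed.
Lemma dag_ar {C : SMDC} (X Y Z : Ob C) : dag (ar X Y Z) = al X Y Z.
Proof. eapply coh; hid. Qed.
Lemma dag_lu {C : SMDC} (X : Ob C) : dag (lu X) = lui X.
Proof. eapply coh; hid. Qed.
Lemma dag_ru {C : SMDC} (X : Ob C) : dag (ru X) = rui X.
Proof. eapply coh; hid. Qed.
Lemma lu_lui {C : SMDC} (X : Ob C) : lu X ∘ lui X = idm X.
Proof. eapply coh; hid. Qed.
Lemma lui_lu {C : SMDC} (X : Ob C) : lui X ∘ lu X = idm _.
Proof. eapply coh; hid. Qed.
Lemma ru_rui {C : SMDC} (X : Ob C) : ru X ∘ rui X = idm X.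
Proof. eapply coh; hid. Qed.
Lemma rui_ru {C : SMDC} (X : Ob C) : rui X ∘ ru X = idm _.
Proof. eapply coh; hid. Qed.

Lemma castR_al {C : SMDC} {A B D W : Ob C} (f : Hom C (tens A (tens B D)) W) :
  castH (Hom := Hom C) (eq_sym (tens_assoc A B D)) eq_refl f = f ∘ al A B D.
Proof. rewrite castR. f_equal. eapply coh; hid. Qed.

Lemma castL_al {C : SMDC} {A B D W : Ob C} (f : Hom C W (tens (tens A B) D)) :
  castH (Hom := Hom C) eq_refl (tens_assoc A B D) f = al A B D ∘ f.
Proof. rewrite castL. reflexivity. Qed.

Lemma castL_ar {C : SMDC} {A B D W : Ob C} (f : Hom C W (tens A (tens B D))) :
  castH (Hom := Hom C) eq_refl (eq_sym (tens_assoc A B D)) f = ar A B D ∘ f.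
Proof. rewrite castL. f_equal. eapply coh; hid. Qed.

Section Alg.
Context {C : SMDC} (A : Ob C) (mu : Hom C (tens A A) A) (u : Hom C unitO A).
Let d := dag mu.

Lemma F_assoc : mu ∘ (mu ⊗ idm A) =
    castH (Hom := Hom C) (eq_sym (tens_assoc A A A)) eq_refl (mu ∘ (idm A ⊗ mu)) ->
  mu ∘ (mu ⊗ idm A) = mu ∘ (idm A ⊗ mu) ∘ al A A A.
Proof. intros E. rewrite E, castR_al. reflexivity. Qed.

Lemma F_unitl : castH (Hom := Hom C) (tens_unitl A) eq_refl (mu ∘ (u ⊗ idm A)) = idm A ->
  mu ∘ (u ⊗ idm A) = lu A.
Proof.
  intros E. rewrite castR in E.
  assert (Hc : castH (Hom := Hom C) (tens_unitl A) eq_refl (idm (tens unitO A)) = lui A) by (eapply coh; hid).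
  rewrite Hc in E. rewrite <- (comp_idr (mu ∘ (u ⊗ idm A))), <- (lui_lu A), comp_assoc, E, comp_idl.
  reflexivity.
Qed.

Lemma F_unitr : castH (Hom := Hom C) (tens_unitr A) eq_refl (mu ∘ (idm A ⊗ u)) = idm A ->
  mu ∘ (idm A ⊗ u) = ru A.
Proof.
  intros E. rewrite castR in E.
  assert (Hc : castH (Hom := Hom C) (tens_unitr A) eq_refl (idm (tens A unitO)) = rui A) by (eapply coh; hid).
  rewrite Hc in E. rewrite <- (comp_idr (mu ∘ (idm A ⊗ u))), <- (rui_ru A), comp_assoc, E, comp_idl.
  reflexivity.
Qed.

Lemma F_frob : (idm A ⊗ mu) ∘ castH (Hom := Hom C) eq_refl (tens_assoc A A A) (dag mu ⊗ idm A) = dag mu ∘ mu ->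
  (idm A ⊗ mu) ∘ al A A A ∘ (dag mu ⊗ idm A) = dag mu ∘ mu.
Proof. intros E. rewrite castL_al in E. rewrite <- comp_assoc. exact E. Qed.

Lemma F_mfrob : (idm A ⊗ mu) ∘ al A A A ∘ (dag mu ⊗ idm A) = dag mu ∘ mu ->
  (mu ⊗ idm A) ∘ ar A A A ∘ (idm A ⊗ dag mu) = dag mu ∘ mu.
Proof.
  intros E. apply (f_equal dag) in E. rewrite !dag_comp, !dag_tens, dag_al, !dag_id, dag_invol in E.
  rewrite comp_assoc in E. exact E.
Qed.

Lemma F_coassoc : mu ∘ (mu ⊗ idm A) = mu ∘ (idm A ⊗ mu) ∘ al A A A ->
  ar A A A ∘ (idm A ⊗ dag mu) ∘ dag mu = (dag mu ⊗ idm A) ∘ dag mu.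
Proof.
  intros E. apply (f_equal dag) in E. rewrite !dag_comp, !dag_tens, dag_al, !dag_id in E.
  rewrite comp_assoc in E. symmetry. exact E.
Qed.

Lemma F_counitl : mu ∘ (u ⊗ idm A) = lu A -> (dag u ⊗ idm A) ∘ dag mu = lui A.
Proof. intros E. apply (f_equal dag) in E. rewrite dag_comp, dag_tens, dag_id, dag_lu in E. exact E. Qed.

Lemma F_counitr : mu ∘ (idm A ⊗ u) = ru A -> (idm A ⊗ dag u) ∘ dag mu = rui A.
Proof. intros E. apply (f_equal dag) in E. rewrite dag_comp, dag_tens, dag_id, dag_ru in E. exact E. Qed.

End Alg.

Lemma tsr {C : SMDC} {X Y Z W : Ob C} (f : Hom C X Y) (g : Hom C Y Z) :
  idm W ⊗ (g ∘ f) = (idm W ⊗ g) ∘ (idm W ⊗ f).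
Proof. rewrite <- tensH_comp, comp_idl. reflexivity. Qed.
Lemma tsl {C : SMDC} {X Y Z W : Ob C} (f : Hom C X Y) (g : Hom C Y Z) :
  (g ∘ f) ⊗ idm W = (g ⊗ idm W) ∘ (f ⊗ idm W).
Proof. rewrite <- tensH_comp, comp_idl. reflexivity. Qed.
Lemma xch1 {C : SMDC} {X Y Z W : Ob C} (f : Hom C X Y) (g : Hom C Z W) :
  f ⊗ g = (f ⊗ idm W) ∘ (idm X ⊗ g).
Proof. rewrite <- tensH_comp, comp_idl, comp_idr. reflexivity. Qed.
Lemma xch2 {C : SMDC} {X Y Z W : Ob C} (f : Hom C X Y) (g : Hom C Z W) :
  f ⊗ g = (idm Y ⊗ g) ∘ (f ⊗ idm Z).
Proof. rewrite <- tensH_comp, comp_idl, comp_idr. reflexivity. Qed.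

Lemma tsr' {C : SMDC} {X Y Z W : Ob C} (f : Hom C X Y) (g : Hom C Y Z) :
  (idm W ⊗ g) ∘ (idm W ⊗ f) = idm W ⊗ (g ∘ f).
Proof. symmetry; apply tsr. Qed.
Lemma tsl' {C : SMDC} {X Y Z W : Ob C} (f : Hom C X Y) (g : Hom C Y Z) :
  (g ⊗ idm W) ∘ (f ⊗ idm W) = (g ∘ f) ⊗ idm W.
Proof. symmetry; apply tsl. Qed.

Section Main.
Context {C : SMDC} (A : Ob C) (mu : Hom C (tens A A) A) (u : Hom C unitO A) (H : Hom C A A).
Context (frob : (idm A ⊗ mu) ∘ al A A A ∘ (dag mu ⊗ idm A) = dag mu ∘ mu)
        (mfrob : (mu ⊗ idm A) ∘ ar A A A ∘ (idm A ⊗ dag mu) = dag mu ∘ mu)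
        (assoc : mu ∘ (mu ⊗ idm A) = mu ∘ (idm A ⊗ mu) ∘ al A A A)
        (coassoc : ar A A A ∘ (idm A ⊗ dag mu) ∘ dag mu = (dag mu ⊗ idm A) ∘ dag mu)
        (unitl : mu ∘ (u ⊗ idm A) = lu A) (unitr : mu ∘ (idm A ⊗ u) = ru A)
        (counitl : (dag u ⊗ idm A) ∘ dag mu = lui A)
        (HH : H ∘ H = idm A) (dagH : dag H = H)
        (Hsym : (H ⊗ idm A) ∘ (dag mu ∘ u) = (idm A ⊗ H) ∘ (dag mu ∘ u))
        (compl : mu ∘ (H ⊗ H) ∘ dag mu = u ∘ dag u).

Lemma Dr : dag mu = (mu ⊗ idm A) ∘ ar A A A ∘ (idm A ⊗ (dag mu ∘ u)) ∘ rui A.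
Proof.
  rewrite tsr. la. rw mfrob. rewrite <- (comp_assoc _ mu), unitr, <- comp_assoc, ru_rui, comp_idr.
  reflexivity.
Qed.

Lemma Dl : dag mu = (idm A ⊗ mu) ∘ al A A A ∘ ((dag mu ∘ u) ⊗ idm A) ∘ lui A.
Proof.
  rewrite tsl. la. rw frob. rewrite <- (comp_assoc _ mu), unitl, <- comp_assoc, lu_lui, comp_idr.
  reflexivity.
Qed.

Lemma TrA : (idm A ⊗ H) ∘ dag mu = ((mu ∘ (idm A ⊗ H)) ⊗ idm A) ∘ ar A A A ∘ (idm A ⊗ (dag mu ∘ u)) ∘ rui A.
Proof.
  rewrite Dr at 1. la.
  assert (E1 : (idm A ⊗ H) ∘ (mu ⊗ idm A) = (mu ⊗ idm A) ∘ ((idm A ⊗ idm A) ⊗ H)).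
  { rewrite <- !tensH_comp, !comp_idl, !comp_idr, tensH_id, comp_idr. reflexivity. }
  rw E1. rewrite <- (comp_assoc _ _ (mu ⊗ idm A)), <- ar_nat. la.
  rw (tsr' (W:=A) (dag mu ∘ u) (idm A ⊗ H)). rewrite <- (comp_assoc u (dag mu) (idm A ⊗ H)), <- Hsym, tsr. la.
  rewrite <- (comp_assoc _ _ (mu ⊗ idm A)), ar_nat. la. rw (tsl' (W:=A) (idm A ⊗ H) mu).
  reflexivity.
Qed.
Lemma xch1' {X Y Z W : Ob C} (f : Hom C X Y) (g : Hom C Z W) :
  (f ⊗ idm W) ∘ (idm X ⊗ g) = f ⊗ g.
Proof. symmetry; apply xch1. Qed.
Lemma xch2' {X Y Z W : Ob C} (f : Hom C X Y) (g : Hom C Z W) :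
  (idm Y ⊗ g) ∘ (f ⊗ idm Z) = f ⊗ g.
Proof. symmetry; apply xch2. Qed.

Lemma Tr : (idm A ⊗ mu) ∘ al A A A ∘ (((idm A ⊗ H) ∘ dag mu) ⊗ idm A)
  = ((mu ∘ (idm A ⊗ H)) ⊗ idm A) ∘ ar A A A ∘ (idm A ⊗ dag mu).
Proof.
  rewrite TrA. rewrite Dl at 2.
  remember (mu ∘ (idm A ⊗ H)) as P. remember (dag mu ∘ u) as e.
  transitivity ((P ⊗ mu) ∘ al (tens A A) A A ∘ (ar A A A ⊗ idm A) ∘ ((idm A ⊗ e) ⊗ idm A) ∘ (rui A ⊗ idm A)).
  { rewrite !tsl. la. rewrite <- (comp_assoc _ (al _ _ _)), al_nat, tensH_id.
    la. rw (xch2' P mu). reflexivity. }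
  rewrite !tsr. la.
  rewrite <- (comp_assoc _ (ar _ _ _)), ar_nat, tensH_id. la. rw (xch1' P mu).
  rewrite <- (comp_idr (idm A ⊗ (e ⊗ idm A))), <- (al_ar A unitO A). la.
  rw (eq_sym (al_nat (idm A) e (idm A))).
  assert (E : al (tens A A) A A ∘ (ar A A A ⊗ idm A) = ar A A (tens A A) ∘ (idm A ⊗ al A A A) ∘ al A (tens A A) A)
    by (eapply coh; hid).
  assert (E2 : rui A ⊗ idm A = ar A unitO A ∘ (idm A ⊗ lui A)) by (eapply coh; hid).
  rw E. rewrite E2. la. reflexivity.
Qed.
Lemma Klem : (idm A ⊗ (H ∘ mu ∘ (H ⊗ idm A))) ∘ al A A A ∘ (dag mu ⊗ idm A) ∘ ((H ⊗ idm A) ∘ dag mu ∘ H)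
  = (u ⊗ idm A) ∘ lui A.
Proof.
  rewrite !tsr. la.
  rewrite <- (comp_assoc (al _ _ _)), <- al_nat. la.
  rw (tsl' (W:=A) (dag mu) (idm A ⊗ H)).
  rw Tr. la.
  rw (xch2' H (dag mu)). rewrite (xch1 H (dag mu)). la.
  rewrite <- (tensH_id A A). rw (ar_nat H (idm A) (idm A)).
  rw (tsl' (W:=A) (H ⊗ idm A) (mu ∘ (idm A ⊗ H))).
  rewrite <- (comp_assoc (H ⊗ idm A)), (xch2' H H).
  rw coassoc.
  rw (tsl' (W:=A) (dag mu) (mu ∘ (H ⊗ H))).
  rewrite compl, tsl. la. rw counitl.
  rw (xch2' u H). rewrite (xch1 u H). la.
  rw (eq_sym (lui_nat H)). rw HH. rewrite comp_idr. reflexivity.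
Qed.
Lemma Klem' : (idm A ⊗ (H ∘ mu ∘ (H ⊗ idm A))) ∘ al A A A ∘ (dag mu ⊗ idm A) ∘ (H ⊗ idm A) ∘ dag mu ∘ H
  = (u ⊗ idm A) ∘ lui A.
Proof. rewrite <- Klem. la. reflexivity. Qed.

Lemma KlemT : (idm A ⊗ (idm A ⊗ (H ∘ mu ∘ (H ⊗ idm A)))) ∘ (idm A ⊗ al A A A) ∘ (idm A ⊗ (dag mu ⊗ idm A))
  ∘ (idm A ⊗ ((H ⊗ idm A) ∘ dag mu ∘ H)) = (idm A ⊗ (u ⊗ idm A)) ∘ (idm A ⊗ lui A).
Proof. rewrite <- !tsr. f_equal. la. apply Klem'. Qed.

Definition CN := (mu ⊗ H) ∘ ar A A A ∘ (idm A ⊗ ((H ⊗ idm A) ∘ dag mu ∘ H)).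

Lemma D1 : dag CN ∘ CN = idm _.
Proof.
  unfold CN. repeat rewrite ?dag_comp, ?dag_tens, ?dagH, ?dag_ar, ?dag_id, ?dag_invol. la.
  rw (eq_sym (tensH_comp mu (dag mu) H H)). rewrite HH, <- mfrob, !tsl. la.
  rw (al_nat mu (idm A) (idm A)). rewrite tensH_id.
  rw (xch2' mu (H ∘ mu ∘ (H ⊗ idm A))). rewrite (xch1 mu (H ∘ mu ∘ (H ⊗ idm A))). la.
  rw (eq_sym (ar_nat (idm A) (dag mu) (idm A))).
  assert (E : al (tens A A) A A ∘ (ar A A A ⊗ idm A) ∘ ar A (tens A A) A = ar A A (tens A A) ∘ (idm A ⊗ al A A A))
    by (eapply coh; hid).
  rw E. rewrite <- (tensH_id A A). rw (eq_sym (ar_nat (idm A) (idm A) (H ∘ mu ∘ (H ⊗ idm A)))).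
  rw KlemT. rw (ar_nat (idm A) u (idm A)). rw (tsl' (W:=A) (idm A ⊗ u) mu). rewrite unitr.
  rewrite tensH_id. eapply coh; hid.
Qed.

Lemma Llem : mu ∘ (idm A ⊗ (H ∘ mu ∘ (H ⊗ idm A))) ∘ al A A A ∘ (dag mu ⊗ idm A) = ru A ∘ (idm A ⊗ dag u).
Proof.
  rewrite !tsr. la.
  rewrite <- (comp_assoc (al _ _ _)), <- al_nat. la.
  rw (tsl' (W:=A) (dag mu) (idm A ⊗ H)).
  rw Tr.
  rw (xch2' (mu ∘ (idm A ⊗ H)) H).
  rewrite <- (comp_idl H) at 2. rewrite tensH_comp. la.
  rw assoc. rw (al_nat (idm A) H H). rw (al_ar A A A). rewrite comp_idr.
  rw (tsr' (W:=A) (H ⊗ H) mu). rw (tsr' (W:=A) (dag mu) (mu ∘ (H ⊗ H))).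
  rewrite compl, tsr. la. rw unitr. reflexivity.
Qed.
Lemma mixl {X Y Z W V : Ob C} (h : Hom C V X) (f : Hom C X Y) (g : Hom C Z W) :
  (f ⊗ g) ∘ (h ⊗ idm Z) = (f ∘ h) ⊗ g.
Proof. rewrite <- tensH_comp, comp_idr. reflexivity. Qed.

Lemma GG : (H ⊗ idm A) ∘ dag mu ∘ H ∘ (H ∘ mu ∘ (H ⊗ idm A))
  = ((H ∘ mu ∘ (H ⊗ idm A)) ⊗ idm A) ∘ ar A A A ∘ (idm A ⊗ dag mu).
Proof.
  la. rw HH. rewrite comp_idr.
  rewrite <- (comp_assoc mu (dag mu) (H ⊗ idm A)), <- mfrob. la.
  rw (xch2' H (dag mu)). rewrite (xch1 H (dag mu)). la.
  rewrite <- (tensH_id A A). rw (ar_nat H (idm A) (idm A)).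
  rw (tsl' (W:=A) (H ⊗ idm A) mu). rw (tsl' (W:=A) (mu ∘ (H ⊗ idm A)) H).
  reflexivity.
Qed.

Lemma GG_la : (H ⊗ idm A) ∘ dag mu ∘ H ∘ H ∘ mu ∘ (H ⊗ idm A)
  = ((H ∘ mu ∘ (H ⊗ idm A)) ⊗ idm A) ∘ ar A A A ∘ (idm A ⊗ dag mu).
Proof. rewrite <- GG. la. reflexivity. Qed.

Lemma D2 : CN ∘ dag CN = idm _.
Proof.
  unfold CN. repeat rewrite ?dag_comp, ?dag_tens, ?dagH, ?dag_ar, ?dag_id, ?dag_invol. la.
  rw (tsr' (W:=A) (H ∘ mu ∘ (H ⊗ idm A)) ((H ⊗ idm A) ∘ dag mu ∘ H)).
  rewrite GG_la. rewrite !tsr. la.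
  rw (eq_sym (al_nat (idm A) (idm A) (dag mu))).
  rewrite tensH_id.
  rw (eq_sym (tensH_comp (dag mu) (idm (tens A A)) H (dag mu))). rewrite comp_idl.
  rewrite (xch1 (dag mu) (dag mu ∘ H)), tsr. la.
  rw (ar_nat (idm A) (H ∘ mu ∘ (H ⊗ idm A)) (idm A)).
  assert (E : ar A (tens A A) A ∘ (idm A ⊗ ar A A A) ∘ al A A (tens A A) = (al A A A ⊗ idm A) ∘ ar (tens A A) A A)
    by (eapply coh; hid).
  rw E. rewrite <- (tensH_id A A). rw (ar_nat (dag mu) (idm A) (idm A)).
  rw (mixl (idm A ⊗ (H ∘ mu ∘ (H ⊗ idm A))) mu H).
  rw (mixl (al A A A) (mu ∘ (idm A ⊗ (H ∘ mu ∘ (H ⊗ idm A)))) H).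
  rw (mixl (dag mu ⊗ idm A) (mu ∘ (idm A ⊗ (H ∘ mu ∘ (H ⊗ idm A))) ∘ al A A A) H).
  rewrite Llem.
  rewrite (xch2 (ru A ∘ (idm A ⊗ dag u)) H), tsl. la.
  rw (eq_sym (ar_nat (idm A) (dag u) (idm A))).
  rw (tsr' (W:=A) (dag mu) (dag u ⊗ idm A)). rewrite counitl.
  assert (S : ru A ⊗ idm A ∘ ar A unitO A ∘ idm A ⊗ lui A = idm (tens A A)) by (eapply coh; hid).
  rw S. rewrite comp_idr, tsr', HH. reflexivity.
Qed.
End Main.

Lemma Xi21 {C : SMDC} (A : Ob C) (mu : Hom C (tens A A) A) (u : Hom C unitO A) : Xi mu u 2 1 = mu.
Proof. unfold Xi. simpl. rewrite dag_id, tensH_id, comp_idl, comp_idr. reflexivity. Qed.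
Lemma Xi12 {C : SMDC} (A : Ob C) (mu : Hom C (tens A A) A) (u : Hom C unitO A) : Xi mu u 1 2 = dag mu.
Proof. unfold Xi. simpl. rewrite tensH_id, comp_idr, comp_idr. reflexivity. Qed.
Lemma Xi01 {C : SMDC} (A : Ob C) (mu : Hom C (tens A A) A) (u : Hom C unitO A) : Xi mu u 0 1 = u.
Proof. unfold Xi. simpl. rewrite dag_id, comp_idl. reflexivity. Qed.
Lemma Xi10 {C : SMDC} (A : Ob C) (mu : Hom C (tens A A) A) (u : Hom C unitO A) : Xi mu u 1 0 = dag u.
Proof. unfold Xi. simpl. rewrite comp_idr. reflexivity. Qed.

Lemma CNOT_CN {C : SMDC} (A : Ob C) (mu : Hom C (tens A A) A) (u : Hom C unitO A) (H : Hom C A A) :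
  CNOT mu u H = CN A mu H.
Proof.
  unfold CNOT, CN. rewrite Xi21, Xi12, castL_ar. la.
  rw (eq_sym (ar_nat (idm A) H (idm A))).
  rw (tsr' (W:=A) (dag mu) (H ⊗ idm A)). rw (tsr' (W:=A) H ((H ⊗ idm A) ∘ dag mu)).
  reflexivity.
Qed.

Lemma pure_cast {C : SMDC} (pure : forall A B : Ob C, Hom C A B -> Prop) {X Y X' Y' : Ob C}
  (e1 : X = X') (e2 : Y = Y') (f : Hom C X Y) : pure _ _ f -> pure _ _ (castH (Hom := Hom C) e1 e2 f).
Proof. destruct e1, e2. auto. Qed.

Theorem mainTheorem5 (C : SMDC)
    (pure : forall A B : Ob C, Hom C A B -> Prop)
    (eta : forall A : Ob C, Hom C unitO (tens A A))
    (top : forall A : Ob C, Hom C A unitO)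
    (Hpure : pure_subcategory pure eta)
    (Hdual : self_dual eta)
    (Henv : environment pure eta top)
    (A : Ob C) (mu : Hom C (tens A A) A) (u : Hom C unitO A)
    (Hcl : classical_structure pure eta mu u)
    (H : Hom C A A)
    (HH : complementary pure eta mu u H) :
  nondeg_destructive_measurement pure top mu u (n:=2) (BellMeas top mu u H).
Proof.
  destruct Hpure as [Pid [Pcomp [Ptens [Pdag [Psym Peta]]]]].
  destruct Hcl as [Pmu [Pu [Eassoc [Eul [Eur [Ecomm [Efrob [Espec Eeta]]]]]]]].
  destruct HH as [PH [EHsym [EdagH [[EHu1 EHu2] Ecompl]]]].
  rewrite Xi21, Xi12, Xi01, Xi10 in Ecompl.
  rewrite Eeta in EHsym.
  apply F_assoc in Eassoc. apply F_unitl in Eul. apply F_unitr in Eur. apply F_frob in Efrob.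
  pose proof (F_mfrob _ _ Efrob) as Emfrob.
  pose proof (F_coassoc _ _ Eassoc) as Ecoassoc.
  pose proof (F_counitl _ _ _ Eul) as Ecounitl.
  rewrite EdagH in EHu1.
  exists ((H ⊗ idm A) ∘ CNOT mu u H).
  split; [|split].
  - apply Pcomp; [|apply Ptens; auto].
    unfold CNOT. rewrite Xi21, Xi12.
    repeat first [ apply Pcomp | apply Ptens | apply Pdag | apply pure_cast | apply Pid | assumption ].
  - rewrite CNOT_CN. split.
    + rewrite dag_comp, dag_tens, dag_id, EdagH. la. rw (eq_sym (tensH_comp H H (idm A) (idm A))).
      rewrite EHu1, comp_idl, tensH_id, comp_idr. eapply D1; eassumption.
    + assert (E2 : CN A mu H ∘ dag (CN A mu H) = idm _) by (eapply D2; eassumption).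
      rewrite dag_comp, dag_tens, dag_id, EdagH. la. rw E2.
      cbn [tpow tpowS]. rewrite comp_idr, <- tensH_comp, EHu1, comp_idl, tensH_id. reflexivity.
  - unfold BellMeas. simpl. rewrite comp_assoc, <- tensH_comp, comp_idr. reflexivity.
Qed.
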